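(* Let $\langle f,g\rangle$ be a pencil of plane cubics and suppose that $H(g)$ is defined, distinct from $g$, and $H(g)\in\langle f,g\rangle$. Then for any $C\in SL(3)$ such that $H(C\cdot g)\in\langle f,C\cdot g\rangle$, we have $C\cdot\langle f,g\rangle=\langle f,C\cdot g\rangle$.
   Context: Plane cubics up to scalar are points of $\mathbb{P}^9$; $\langle f,g\rangle$ denotes the line (pencil) spanned by $f,g$. $H(g)=\det(\partial^2g/\partial x_i\partial x_j)$ is the Hessian; ''defined'' means not identically zero, and ''distinct from $g$'' means not proportional to $g$. $SL(3)$ acts on cubics by linear change of variables $x,y,z$, and hence on pencils. *)

(* Defs.v *)
From HB Require Import structures.
From mathcomp Require Import all_boot all_order all_algebra.
From mathcomp Require Import mpoly.
Set Implicit Arguments. Unset Strict Implicit. Unset Printing Implicit Defensive.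
Import GRing.Theory Num.Theory.
Local Open Scope ring_scope.


Definition is_cubic (R : comRingType) (f : {mpoly R[3]}) : Prop :=
  f \is 3.-homog.

Definition hessian (R : comRingType) (g : {mpoly R[3]}) : {mpoly R[3]} :=
  \det (\matrix_(i < 3, j < 3) mderiv i (mderiv j g)).

(* Linear change of variables: (C . g)(x) = g(C^{-1} x); a left action of SL(3). *)
Definition lin_subst (R : comUnitRingType) (C : 'M[R]_3) : 3.-tuple {mpoly R[3]} :=
  [tuple \sum_(j < 3) (invmx C) i j *: 'X_j | i < 3].

Definition act (R : comUnitRingType) (C : 'M[R]_3) (g : {mpoly R[3]}) : {mpoly R[3]} :=
  g \mPo lin_subst C.

Definition proportional (R : comRingType) (p q : {mpoly R[3]}) : Prop :=
  exists c : R, p = c *: q.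

(* f, g span a pencil (a line in P^9): they are linearly independent. *)
Definition is_pencil (R : comRingType) (f g : {mpoly R[3]}) : Prop :=
  forall a b : R, a *: f + b *: g = 0 -> a = 0 /\ b = 0.

(* The linear span <f,g> (the affine cone over the line in P^9). *)
Definition span2 (R : comRingType) (f g : {mpoly R[3]}) : {mpoly R[3]} -> Prop :=
  fun h => exists a b : R, h = a *: f + b *: g.

Definition act_set (R : comUnitRingType) (C : 'M[R]_3) (S : {mpoly R[3]} -> Prop)
  : {mpoly R[3]} -> Prop :=
  fun h => exists k, S k /\ h = act C k.

(* Main.v *)
Require Import Defs.
From HB Require Import structures.
From mathcomp Require Import all_boot all_order all_algebra.
From mathcomp Require Import mpoly.
Import GRing.Theory Num.Theory.
Local Open Scope ring_scope.

Section Ind.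
Variables (n : nat) (R : comRingType).
Lemma mpoly_ind' (P : {mpoly R[n]} -> Prop) :
  (forall c, P c%:MP) -> (forall i, P 'X_i) ->
  (forall p q, P p -> P q -> P (p + q)) -> (forall p q, P p -> P q -> P (p * q)) ->
  forall p, P p.
Proof.
move=> PC PX PD PM p; rewrite [p]mpolyE.
have P0 : P 0 by rewrite -mpolyC0.
have P1 : P 1 by rewrite -mpolyC1.
apply: (big_ind P) => // m _.
rewrite -mul_mpolyC; apply: (PM) => //.
rewrite mpolyXE_id; apply: (big_ind P) => // i _.
move: (m i) => e; elim: e => [|e IH]; first by rewrite expr0.
by rewrite exprS; apply: (PM).
Qed.

Lemma mderivXU (i j : 'I_n) : mderiv i ('X_j : {mpoly R[n]}) = (i == j)%:R%:MP.
Proof.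
rewrite mderivX mnm1E; case: (eqVneq j i) => [->|ji].
  have -> : (U_(i) - U_(i))%MM = 0%MM by apply/mnmP=> l; rewrite mnmBE subnn mnm0E.
  by rewrite ?eqxx mpolyX0 scale1r mpolyC1.
by rewrite scale0r mpolyC0.
Qed.

Lemma mderiv_comp k (lq : n.-tuple {mpoly R[k]}) (l : 'I_k) p :
  mderiv l (p \mPo lq) = \sum_(i < n) (mderiv i p \mPo lq) * mderiv l (tnth lq i).
Proof.
elim/mpoly_ind': p.
- move=> c; rewrite comp_mpolyC mderivC big1 // => i _.
  by rewrite mderivC comp_mpoly0 mul0r.
- move=> j; rewrite comp_mpolyXU -tnth_nth.
  rewrite (bigD1 j) //= big1 => [|i /negbTE ij].
    by rewrite mderivXU eqxx mpolyC1 comp_mpoly1 mul1r addr0.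
  by rewrite mderivXU ij mpolyC0 comp_mpoly0 mul0r.
- move=> p q Hp Hq; rewrite comp_mpolyD mderivD Hp Hq -big_split /=.
  by apply: eq_bigr => i _; rewrite mderivD comp_mpolyD mulrDl.
- move=> p q Hp Hq; rewrite rmorphM /= mderivM Hp Hq mulr_suml mulr_sumr -big_split /=.
  apply: eq_bigr => i _; rewrite mderivM comp_mpolyD !rmorphM /=.
  rewrite mulrDl; congr (_ + _); rewrite -!mulrA; congr (_ * _); exact: mulrC.
Qed.

Lemma comp_mpolyA k j (lq : n.-tuple {mpoly R[k]}) (lr : k.-tuple {mpoly R[j]}) p :
  (p \mPo lq) \mPo lr = p \mPo [tuple tnth lq i \mPo lr | i < n].
Proof.
elim/mpoly_ind': p.
- by move=> c; rewrite !comp_mpolyC.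
- by move=> i; rewrite !comp_mpolyXU -!tnth_nth tnth_map tnth_ord_tuple.
- by move=> p q Hp Hq; rewrite !comp_mpolyD Hp Hq.
- by move=> p q Hp Hq; rewrite !rmorphM /= Hp Hq.
Qed.
End Ind.

From mathcomp Require Import ring.

Section Act.
Variable R : fieldType.
Implicit Types (C : 'M[R]_3) (p q : {mpoly R[3]}).

Lemma mderiv_lin C (i k : 'I_3) :
  mderiv k (tnth (lin_subst C) i) = (invmx C i k)%:MP.
Proof.
rewrite /lin_subst tnth_map tnth_ord_tuple raddf_sum /=.
rewrite (bigD1 k) //= big1 => [|j /negbTE kj].
  by rewrite mderivZ mderivXU eqxx mpolyC1 addr0 -mul_mpolyC mulr1.
by rewrite mderivZ mderivXU eq_sym kj mpolyC0 scaler0.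
Qed.

Lemma mderiv_act C p (k : 'I_3) :
  mderiv k (act C p) = \sum_(i < 3) (invmx C i k)%:MP * act C (mderiv i p).
Proof.
rewrite /act mderiv_comp; apply: eq_bigr => i _.
by rewrite mderiv_lin mulrC.
Qed.

Lemma hessian_act_mx C p :
  (\matrix_(i < 3, j < 3) mderiv i (mderiv j (act C p))) =
  (map_mx (@mpolyC 3 R) (invmx C))^T *m
  map_mx (act C) (\matrix_(i < 3, j < 3) mderiv i (mderiv j p)) *m
  map_mx (@mpolyC 3 R) (invmx C).
Proof.
apply/matrixP => a b; rewrite !mxE mderiv_act raddf_sum /=.
apply: eq_bigr => j _; rewrite !mxE mulr_suml mderiv_mulC mderiv_act mulr_sumr.
apply: eq_bigr => i _; rewrite !mxE; ring.
Qed.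

Lemma hessian_act C p : \det C = 1 -> hessian (act C p) = act C (hessian p).
Proof.
move=> dC; rewrite /hessian hessian_act_mx !det_mulmx det_tr !det_map_mx.
by rewrite det_inv dC invr1 rmorph1 mul1r mulr1.
Qed.

Lemma act_inv C p : C \in unitmx -> act (invmx C) (act C p) = p.
Proof.
move=> uC; rewrite /act comp_mpolyA.
rewrite -[RHS]comp_mpoly_id; congr comp_mpoly.
apply: eq_from_tnth => i; rewrite !tnth_map !tnth_ord_tuple.
rewrite raddf_sum /=.
under eq_bigr => j _ do rewrite comp_mpolyZ comp_mpolyXU -tnth_nth /lin_subst tnth_map tnth_ord_tuple invmxK scaler_sumr.
rewrite exchange_big /=.
transitivity (\sum_(k<3) ((invmx C *m C) i k) *: ('X_k : {mpoly R[3]})).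
  apply: eq_bigr => k _; rewrite mxE scaler_suml; apply: eq_bigr => j _; by rewrite scalerA.
rewrite mulVmx // (bigD1 i) //= big1 => [|k ik]; rewrite mxE.
  by rewrite eqxx mulr1n scale1r addr0.
by rewrite eq_sym (negbTE ik) mulr0n scale0r.
Qed.


Lemma actD C p q : act C (p + q) = act C p + act C q.
Proof. by rewrite /act comp_mpolyD. Qed.

Lemma actZ C c p : act C (c *: p) = c *: act C p.
Proof. by rewrite /act comp_mpolyZ. Qed.
End Act.

Theorem mainTheorem13 (R : numClosedFieldType) (f g : {mpoly R[3]}) :
  is_cubic f -> is_cubic g -> is_pencil f g ->
  hessian g != 0 ->
  ~ proportional (hessian g) g ->
  span2 f g (hessian g) ->
  forall C : 'M[R]_3, \det C = 1 ->
    span2 f (act C g) (hessian (act C g)) ->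
    forall h, act_set C (span2 f g) h <-> span2 f (act C g) h.
Proof.
move=> _ _ _ _ nprop [a0 [b0 Hg]] C dC [a1 [b1 HC]] h.
have uC : C \in unitmx by rewrite unitmxE dC unitr1.
have a0n : a0 != 0.
  apply/eqP => a00; apply: nprop; exists b0; by rewrite Hg a00 scale0r add0r.
have HC' : act C (hessian g) = a1 *: f + b1 *: act C g by rewrite -hessian_act.
have a1n : a1 != 0.
  apply/eqP => a10; apply: nprop; exists b1.
  have : act C (hessian g) = act C (b1 *: g) by rewrite HC' a10 scale0r add0r actZ.
  by move/(congr1 (act (invmx C))); rewrite !act_inv.
have Af : act C f = (a1 / a0) *: f + ((b1 - b0) / a0) *: act C g.
  have e : a0 *: act C f = a1 *: f + (b1 - b0) *: act C g.
    apply: (addIr (b0 *: act C g)).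
    by rewrite scalerBl addrA subrK -HC' Hg actD !actZ.
  apply: (scalerI a0n); rewrite e scalerDr !scalerA.
  by rewrite !mulrA !(mulrC a0) -!mulrA !divff // !mulr1.
have key : forall c d, c *: act C f + d *: act C g =
    (c * (a1 / a0)) *: f + (c * ((b1 - b0) / a0) + d) *: act C g.
  by move=> c d; rewrite Af scalerDr !scalerA -addrA -scalerDl.
split.
- case=> k [[a [b ->]] ->]; exists (a * (a1 / a0)), (a * ((b1 - b0) / a0) + b).
  by rewrite actD !actZ key.
- case=> [a [b ->]].
  exists ((a * a0 / a1) *: f + (b - a * (b1 - b0) / a1) *: g); split.
    by exists (a * a0 / a1), (b - a * (b1 - b0) / a1).
  rewrite actD !actZ key; congr (_ *: _ + _ *: _); field.
  all: by apply/andP.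
Qed.
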